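(* Let $n\geq 2$, $\mu>0$, $1<\lambda\leq n$, and $h(x,y)=(\mu x,\lambda y)$. Then there exists an orientation preserving homeomorphism $g:\mathbb{R}\to\mathbb{R}$ with $g\neq\mathrm{id}$ and $\sup_{y}|g(y)-y|<\infty$ such that $f(x,y)=(x,g(y))$ satisfies $hfh^{-1}=f^n$ (in particular $f$ is a nontrivial orientation preserving homeomorphism of $\mathbb{R}^2$ with bounded displacement). For $\lambda=n$ one may take $g(y)=y+1$. *)

(* Defs.v *)
From Stdlib Require Import Reals.
Open Scope R_scope.

Definition homeomorphism_R (g : R -> R) : Prop :=
  continuity g /\
  exists ginv : R -> R, continuity ginv /\
    (forall y, ginv (g y) = y) /\ (forall y, g (ginv y) = y).

Definition orientation_preserving_R (g : R -> R) : Prop :=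
  forall a b, a < b -> g a < g b.

Definition bounded_displacement_R (g : R -> R) : Prop :=
  exists M : R, forall y, Rabs (g y - y) <= M.

Definition hmap (mu lam : R) (p : R * R) : R * R := (mu * fst p, lam * snd p).
Definition hinv (mu lam : R) (p : R * R) : R * R := (fst p / mu, snd p / lam).

Definition fmap (g : R -> R) (p : R * R) : R * R := (fst p, g (snd p)).

Definition iterf (n : nat) (f : R * R -> R * R) : R * R -> R * R :=
  fun p => Nat.iter n f p.

Definition conj_relation (mu lam : R) (n : nat) (g : R -> R) : Prop :=
  forall p : R * R, hmap mu lam (fmap g (hinv mu lam p)) = iterf n (fmap g) p.

(* Main.v *)
Require Import Defs.
From Stdlib Require Import Reals Lra Lia.
Open Scope R_scope.

Definition P (a y : R) : R := if Rlt_dec 0 y then exp (a * ln y) else 0.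
Definition phi (a y : R) : R := if Rle_dec 0 y then P a y else - P a (- y).

Lemma P_pos a y : 0 < y -> P a y = exp (a * ln y).
Proof. intro H; unfold P; destruct (Rlt_dec 0 y); [reflexivity|lra]. Qed.

Lemma P_0 a : P a 0 = 0.
Proof. unfold P; destruct (Rlt_dec 0 0); [lra|reflexivity]. Qed.

Lemma P_ge0 a y : 0 <= P a y.
Proof. unfold P; destruct (Rlt_dec 0 y); [left; apply exp_pos|lra]. Qed.

Lemma P_mono a x y : 0 < a -> 0 <= x -> x < y -> P a x < P a y.
Proof.
  intros Ha Hx Hxy. rewrite (P_pos a y) by lra.
  destruct Hx as [Hx|Hx].
  - rewrite P_pos by lra. apply exp_increasing.
    apply Rmult_lt_compat_l; [lra|]. apply ln_increasing; lra.
  - subst. rewrite P_0. apply exp_pos.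
Qed.

Lemma P_monow c x y : 0 <= c -> 0 < x -> x <= y -> P c x <= P c y.
Proof.
  intros Hc Hx Hxy. rewrite !P_pos by lra.
  destruct Hxy as [H|H]; [|subst; lra].
  destruct Hc as [Hc|Hc]; [|subst; rewrite !Rmult_0_l; lra].
  left; apply exp_increasing. apply Rmult_lt_compat_l; [lra|]. apply ln_increasing; lra.
Qed.

Lemma P_inv a y : 0 < a -> 0 <= y -> P (/ a) (P a y) = y.
Proof.
  intros Ha [Hy|Hy].
  - rewrite (P_pos a y) by lra. rewrite P_pos by apply exp_pos.
    rewrite ln_exp. replace (/ a * (a * ln y)) with (ln y) by (field; lra).
    apply exp_ln; lra.
  - subst. rewrite !P_0. reflexivity.
Qed.

Lemma phi_inv a y : 0 < a -> phi (/ a) (phi a y) = y.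
Proof.
  intros Ha. unfold phi.
  destruct (Rle_dec 0 y) as [Hy|Hy].
  - destruct (Rle_dec 0 (P a y)) as [H|H].
    + apply P_inv; lra.
    + pose proof (P_ge0 a y); lra.
  - destruct (Rle_dec 0 (- P a (- y))) as [H|H].
    + pose proof (P_mono a 0 (-y) Ha ltac:(lra) ltac:(lra)). rewrite P_0 in H0. lra.
    + rewrite Ropp_involutive. rewrite P_inv by lra. lra.
Qed.

Lemma phi_mono a x y : 0 < a -> x < y -> phi a x < phi a y.
Proof.
  intros Ha Hxy. unfold phi.
  destruct (Rle_dec 0 x), (Rle_dec 0 y).
  - apply P_mono; lra.
  - lra.
  - pose proof (P_ge0 a y). pose proof (P_mono a 0 (-x) Ha ltac:(lra) ltac:(lra)).
    rewrite P_0 in H0. lra.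
  - pose proof (P_mono a (-y) (-x) Ha ltac:(lra) ltac:(lra)). lra.
Qed.

Lemma P_mul a x y : 0 < x -> 0 <= y -> P a (x * y) = P a x * P a y.
Proof.
  intros Hx [Hy|Hy].
  - rewrite !P_pos; try nra. rewrite ln_mult by lra. rewrite <- exp_plus. f_equal; ring.
  - subst. rewrite Rmult_0_r, !P_0. ring.
Qed.

Lemma phi_scale a x y : 0 < x -> phi a (x * y) = P a x * phi a y.
Proof.
  intros Hx. unfold phi.
  destruct (Rle_dec 0 (x*y)), (Rle_dec 0 y).
  - apply P_mul; lra.
  - exfalso. nra.
  - destruct (Req_dec y 0); [subst; lra|]. exfalso; nra.
  - replace (- (x*y)) with (x * (-y)) by ring. rewrite P_mul by lra. ring.
Qed.

Lemma P_super a u : 1 <= a -> 0 <= u -> P a u + 1 <= P a (u + 1).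
Proof.
  intros Ha [Hu|Hu].
  - assert (E : forall x, 0 < x -> P a x = x * P (a - 1) x).
    { intros x Hx. rewrite !P_pos by lra. pattern x at 2; rewrite <- (exp_ln x Hx).
      rewrite <- exp_plus. f_equal; ring. }
    rewrite !E by lra.
    assert (H1 : P (a-1) u <= P (a-1) (u+1)) by (apply P_monow; lra).
    assert (H2 : 1 <= P (a-1) (u+1)).
    { rewrite P_pos by lra.
      destruct (Req_dec (a-1) 0) as [E0|E0]; [rewrite E0, Rmult_0_l, exp_0; lra|].
      left. pose proof (exp_increasing 0 ((a-1)*ln(u+1))) as HH. rewrite exp_0 in HH. apply HH. apply Rmult_lt_0_compat; [destruct Ha as [Ha|Ha]; [lra|exfalso; apply E0; lra]|].
      rewrite <- ln_1. apply ln_increasing; lra. }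
    nra.
  - subst. rewrite P_0, Rplus_0_l, P_pos by lra. rewrite ln_1, Rmult_0_r, exp_0. lra.
Qed.

Lemma P_disp a w : 1 <= a -> 0 <= w -> P (/a) (w + 1) - P (/a) w <= 1.
Proof.
  intros Ha Hw.
  set (u := P (/a) w). set (v := P (/a) (w+1)).
  assert (Hu : P a u = w).
  { unfold u. rewrite <- (Rinv_inv a) at 1. apply P_inv; [apply Rinv_0_lt_compat; lra|lra]. }
  assert (Hv : P a v = w + 1).
  { unfold v. rewrite <- (Rinv_inv a) at 1. apply P_inv; [apply Rinv_0_lt_compat; lra|lra]. }
  destruct (Rle_dec (v - u) 1) as [H|H]; [exact H|exfalso].
  assert (Hu0 : 0 <= u) by apply P_ge0.
  pose proof (P_mono a (u+1) v ltac:(lra) ltac:(lra) ltac:(lra)).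
  pose proof (P_super a u Ha Hu0). lra.
Qed.

Lemma P_le1 a w : 0 < a -> 0 <= w -> w <= 1 -> P a w <= 1.
Proof.
  intros Ha Hw [H1|H1].
  - pose proof (P_mono a w 1 Ha Hw H1). rewrite (P_pos a 1) in H by lra.
    rewrite ln_1, Rmult_0_r, exp_0 in H. lra.
  - subst. rewrite P_pos by lra. rewrite ln_1, Rmult_0_r, exp_0. lra.
Qed.

Lemma phi_disp a z : 1 <= a -> Rabs (phi (/a) (z + 1) - phi (/a) z) <= 2.
Proof.
  intros Ha.
  assert (Hb : 0 < /a) by (apply Rinv_0_lt_compat; lra).
  pose proof (phi_mono (/a) z (z+1) Hb ltac:(lra)).
  rewrite Rabs_right by lra.
  unfold phi. destruct (Rle_dec 0 (z+1)), (Rle_dec 0 z).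
  - pose proof (P_disp a z Ha r0). lra.
  - pose proof (P_le1 (/a) (z+1) Hb r ltac:(lra)).
    pose proof (P_le1 (/a) (-z) Hb ltac:(lra) ltac:(lra)). lra.
  - lra.
  - pose proof (P_disp a (-z-1) Ha ltac:(lra)).
    replace (-z-1+1) with (-z) in H0 by ring. replace (- (z+1)) with (-z-1) by ring. lra.
Qed.

Lemma cont_of_incr_surj (F : R -> R) :
  (forall x y, x < y -> F x < F y) -> (forall z, exists x, F x = z) -> continuity F.
Proof.
  intros Hm Hs y. unfold continuity_pt, continue_in, limit1_in, limit_in. simpl.
  intros eps Heps.
  destruct (Hs (F y - eps)) as [l Hl]. destruct (Hs (F y + eps)) as [r Hr].
  assert (Hly : l < y).
  { destruct (Rlt_dec l y) as [H|H]; [exact H|].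
    destruct (Req_dec l y); [subst; lra|]. assert (y < l) by lra. apply Hm in H1. lra. }
  assert (Hyr : y < r).
  { destruct (Rlt_dec y r) as [H|H]; [exact H|].
    destruct (Req_dec r y); [subst; lra|]. assert (r < y) by lra. apply Hm in H1. lra. }
  exists (Rmin (y - l) (r - y)). split; [apply Rmin_pos; lra|].
  intros z [_ Hz]. unfold R_dist in *.
  assert (Hz1 : Rabs (z - y) < y - l) by (eapply Rlt_le_trans; [exact Hz| apply Rmin_l]).
  assert (Hz2 : Rabs (z - y) < r - y) by (eapply Rlt_le_trans; [exact Hz| apply Rmin_r]).
  apply Rabs_def2 in Hz1. apply Rabs_def2 in Hz2.
  assert (l < z) by lra. assert (z < r) by lra.
  apply Hm in H. apply Hm in H0. apply Rabs_def1; lra.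
Qed.

Lemma homeo_of (g gi : R -> R) :
  (forall x y, x < y -> g x < g y) -> (forall x y, x < y -> gi x < gi y) ->
  (forall y, gi (g y) = y) -> (forall y, g (gi y) = y) -> homeomorphism_R g.
Proof.
  intros Hg Hgi H1 H2. split.
  - apply cont_of_incr_surj; [exact Hg|]. intro z; exists (gi z); apply H2.
  - exists gi. split; [|split; assumption].
    apply cont_of_incr_surj; [exact Hgi|]. intro z; exists (g z); apply H1.
Qed.

Lemma iter_fmap k g p : Nat.iter k (fmap g) p = (fst p, Nat.iter k g (snd p)).
Proof. induction k; simpl; [destruct p; reflexivity|rewrite IHk; reflexivity]. Qed.

Theorem mainTheorem14 (n : nat) (mu lam : R) :
  (2 <= n)%nat -> 0 < mu -> 1 < lam -> lam <= INR n ->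
  (exists g : R -> R,
     homeomorphism_R g /\ orientation_preserving_R g /\
     (exists y, g y <> y) /\ bounded_displacement_R g /\
     conj_relation mu lam n g)
  /\
  (lam = INR n ->
     let g := fun y : R => y + 1 in
     homeomorphism_R g /\ orientation_preserving_R g /\
     (exists y, g y <> y) /\ bounded_displacement_R g /\
     conj_relation mu lam n g).
Proof.
  intros Hn Hmu Hlam Hln.
  assert (Hn1 : 1 < INR n) by (apply lt_1_INR; lia).
  split.
  - set (a := ln (INR n) / ln lam).
    assert (Hll : 0 < ln lam) by (rewrite <- ln_1; apply ln_increasing; lra).
    assert (Hln' : ln lam <= ln (INR n)).
    { destruct Hln as [H|H]; [left; apply ln_increasing; lra| rewrite H; lra]. }
    assert (Ha : 1 <= a).
    { unfold a. apply (Rmult_le_reg_r (ln lam)); [lra|].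
      unfold Rdiv. rewrite Rmult_assoc, Rinv_l by lra. lra. }
    assert (Ha0 : 0 < a) by lra.
    assert (Hb0 : 0 < / a) by (apply Rinv_0_lt_compat; lra).
    assert (Hinv1 : forall y, phi (/a) (phi a y) = y) by (intro; apply phi_inv; lra).
    assert (Hinv2 : forall y, phi a (phi (/a) y) = y).
    { intro y. rewrite <- (Rinv_inv a) at 1. apply phi_inv; lra. }
    assert (Pa : P a lam = INR n).
    { rewrite P_pos by lra. unfold a.
      replace (ln (INR n) / ln lam * ln lam) with (ln (INR n)) by (field; lra).
      apply exp_ln; lra. }
    assert (Pb : P (/a) (INR n) = lam).
    { rewrite P_pos by lra. unfold a.
      replace (/ (ln (INR n) / ln lam) * ln (INR n)) with (ln lam).
      apply exp_ln; lra. field. split; lra. }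
    exists (fun y => phi (/a) (phi a y + 1)).
    assert (Hmono : forall x y, x < y -> phi (/a) (phi a x + 1) < phi (/a) (phi a y + 1)).
    { intros x y H. apply phi_mono; [lra|]. pose proof (phi_mono a x y Ha0 H). lra. }
    split; [|split; [|split; [|split]]].
    + apply (homeo_of _ (fun y => phi (/a) (phi a y - 1))).
      * exact Hmono.
      * intros x y H. apply phi_mono; [lra|]. pose proof (phi_mono a x y Ha0 H). lra.
      * intro y. rewrite Hinv2. replace (phi a y + 1 - 1) with (phi a y) by ring. apply Hinv1.
      * intro y. rewrite Hinv2. replace (phi a y - 1 + 1) with (phi a y) by ring. apply Hinv1.
    + exact Hmono.
    + exists 0. unfold phi at 2. destruct (Rle_dec 0 0); [|lra]. rewrite P_0, Rplus_0_l.
      unfold phi. destruct (Rle_dec 0 1); [|lra]. rewrite P_pos by lra.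
      rewrite ln_1, Rmult_0_r, exp_0. lra.
    + exists 2. intro y. pose proof (phi_disp a (phi a y) Ha). rewrite Hinv1 in H. exact H.
    + intro p. unfold conj_relation, iterf. intros; cbv beta. rewrite iter_fmap. unfold hmap, hinv, fmap. simpl.
      f_equal; [field; lra|].
      assert (It : forall k y, Nat.iter k (fun y => phi (/a) (phi a y + 1)) y
                              = phi (/a) (phi a y + INR k)).
      { induction k; intro y.
        - simpl. rewrite Rplus_0_r. symmetry; apply Hinv1.
        - simpl Nat.iter. rewrite IHk, Hinv2, S_INR. f_equal. ring. }
      rewrite It.
      assert (E1 : phi a (snd p) = INR n * phi a (snd p / lam)).
      { rewrite <- Pa, <- phi_scale by lra. f_equal. field; lra. }
      assert (E2 : forall w, lam * phi (/a) w = phi (/a) (INR n * w)).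
      { intro w. rewrite phi_scale, Pb by lra. reflexivity. }
      rewrite E2. f_equal. rewrite E1. field; lra.
  - intros Heq g. unfold g.
    assert (Hm : forall x y, x < y -> x + 1 < y + 1) by (intros; lra).
    split; [|split; [|split; [|split]]].
    + apply (homeo_of _ (fun y => y - 1)); [exact Hm| intros; lra| intros; ring| intros; ring].
    + exact Hm.
    + exists 0. lra.
    + exists 1. intro y. replace (y + 1 - y) with 1 by ring. rewrite Rabs_R1. lra.
    + intro p. unfold conj_relation, iterf. intros; cbv beta. rewrite iter_fmap. unfold hmap, hinv, fmap. simpl.
      assert (It : forall k y, Nat.iter k (fun y => y + 1) y = y + INR k).
      { induction k; intro y; [simpl; ring|simpl Nat.iter; rewrite IHk, S_INR; ring]. }
      rewrite It, <- Heq. f_equal; field; lra.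
Qed.
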